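(* Let $\beta\in(1,3/2]$. Suppose $\omega,\omega'\in\Omega$ and $\upsilon,\upsilon'\in\Upsilon$ satisfy $\omega\prec\omega'$ and $\upsilon\prec\upsilon'$. Then for every $\vec z\in S_\beta$, $$(d_1(\omega,\upsilon,\vec z),d_2(\omega,\upsilon,\vec z),\ldots)\preceq(d_1(\omega',\upsilon',\vec z),d_2(\omega',\upsilon',\vec z),\ldots).$$
   Context: Let $\vec q_0=(0,0)$, $\vec q_1=(1,0)$, $\vec q_2=(0,1)$, $f_{\vec q_i}(\vec z)=(\vec z+\vec q_i)/\beta$, and $S_\beta$ the attractor of this IFS, which for $1<\beta\le3/2$ is the closed triangle with vertices $(0,0)$, $(\frac1{\beta-1},0)$, $(0,\frac1{\beta-1})$. Subsets of $S_\beta$: $E_0=[0,\frac1\beta)\times[0,\frac1\beta)$; $E_1=\{0\le y<\frac1\beta,\ \frac{1}{\beta(\beta-1)}<x+y\le\frac{1}{\beta-1}\}$; $E_2=\{0\le x<\frac1\beta,\ \frac{1}{\beta(\beta-1)}<x+y\le\frac{1}{\beta-1}\}$; $C_{01}=\{x\ge\frac1\beta,\ 0\le y<\frac1\beta,\ x+y\le\frac{1}{\beta(\beta-1)}\}$; $C_{12}=\{x\ge\frac1\beta,\ y\ge\frac1\beta,\ \frac{1}{\beta(\beta-1)}<x+y\le\frac{1}{\beta-1}\}$; $C_{02}=\{0\le x<\frac1\beta,\ y\ge\frac1\beta,\ x+y\le\frac{1}{\beta(\beta-1)}\}$; $C_{012}=\{x\ge\frac1\beta,\ y\ge\frac1\beta,\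 x+y\le\frac{1}{\beta(\beta-1)}\}$. Let $\Omega=\{0,1\}^{\mathbb N}$, $\Upsilon=\{0,1,2\}^{\mathbb N}$, with left shifts $\sigma$, $\sigma'$. Define $K_\beta:\Omega\times\Upsilon\times S_\beta\to\Omega\times\Upsilon\times S_\beta$ by: $K_\beta(\omega,\upsilon,\vec z)=(\omega,\upsilon,\beta\vec z-\vec q_i)$ if $\vec z\in E_i$; $=(\sigma\omega,\upsilon,\beta\vec z-\vec q_i)$ if $\omega_1=0$ and $\vec z\in C_{ij}$, $ij\in\{01,12,02\}$; $=(\sigma\omega,\upsilon,\beta\vec z-\vec q_j)$ if $\omega_1=1$ and $\vec z\in C_{ij}$; $=(\omega,\sigma'\upsilon,\beta\vec z-\vec q_i)$ if $\vec z\in C_{012}$ and $\upsilon_1=i$. The digit $d_1(\omega,\upsilon,\vec z)\in\{\vec q_0,\vec q_1,\vec q_2\}$ is the vector subtracted in this definition (so the third coordinate of $K_\beta(\omega,\upsilon,\vec z)$ is $\beta\vec z-d_1$), and $d_n=d_1\circ K_\beta^{n-1}$. The relation $\prec$ ($\preceq$) denotes the (strict / non-strict) lexicographic order on $\Omega$, on $\Upsilon$, and on $\{\vec q_0,\vec q_1,\vec q_2\}^{\mathbb N}$, where in the last case symbols are ordered $\vec q_0<\vec q_1<\vec q_2$. *)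

(* Defs.v *)
From Stdlib Require Import Reals Lra ClassicalEpsilon.
Open Scope R_scope.

Inductive digit : Type := D0 | D1 | D2.

Definition digit_rank (d : digit) : nat :=
  match d with D0 => 0%nat | D1 => 1%nat | D2 => 2%nat end.

Definition qvec (d : digit) : R * R :=
  match d with D0 => (0, 0) | D1 => (1, 0) | D2 => (0, 1) end.

(* Sequences indexed from 0: u 0 is the paper's u_1. *)
Definition Omega := nat -> bool.      (* {0,1}^N with 0 = false, 1 = true *)
Definition Upsilon := nat -> digit.

Definition shift {A : Type} (u : nat -> A) : nat -> A := fun n => u (S n).

Definition lex_lt {A : Type} (lt : A -> A -> Prop) (u v : nat -> A) : Prop :=
  exists n, (forall k, (k < n)%nat -> u k = v k) /\ lt (u n) (v n).
Definition lex_le {A : Type} (lt : A -> A -> Prop) (u v : nat -> A) : Prop :=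
  lex_lt lt u v \/ (forall k, u k = v k).

Definition bool_lt (a b : bool) : Prop := a = false /\ b = true.
Definition digit_lt (a b : digit) : Prop := (digit_rank a < digit_rank b)%nat.

Definition S_beta (b : R) (z : R * R) : Prop :=
  0 <= fst z /\ 0 <= snd z /\ fst z + snd z <= 1 / (b - 1).

Section Regions.
Variable b : R.
Let a := 1 / b.
Let c := 1 / (b * (b - 1)).
Let t := 1 / (b - 1).
Definition E0 (z : R * R) : Prop := let (x, y) := z in 0 <= x < a /\ 0 <= y < a.
Definition E1 (z : R * R) : Prop := let (x, y) := z in 0 <= y < a /\ c < x + y <= t.
Definition E2 (z : R * R) : Prop := let (x, y) := z in 0 <= x < a /\ c < x + y <= t.
Definition C01 (z : R * R) : Prop := let (x, y) := z in a <= x /\ 0 <= y < a /\ x + y <= c.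
Definition C12 (z : R * R) : Prop := let (x, y) := z in a <= x /\ a <= y /\ c < x + y <= t.
Definition C02 (z : R * R) : Prop := let (x, y) := z in 0 <= x < a /\ a <= y /\ x + y <= c.
Definition C012 (z : R * R) : Prop := let (x, y) := z in a <= x /\ a <= y /\ x + y <= c.
End Regions.

Definition state : Type := (Omega * Upsilon * (R * R))%type.

Definition affine (b : R) (z : R * R) (d : digit) : R * R :=
  (b * fst z - fst (qvec d), b * snd z - snd (qvec d)).

Definition pick (P : Prop) {A : Type} (x y : A) : A :=
  if excluded_middle_informative P then x else y.

(* Cases are tested in the
   paper's order E0,E1,E2,C01,C12,C02,C012; these sets are pairwise disjoint. *)
Definition K_step (b : R) (s : state) : state * digit :=
  let '(w, u, z) := s in
  let mk w' u' d := ((w', u', affine b z d), d) in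
  pick (E0 b z) (mk w u D0)
  (pick (E1 b z) (mk w u D1)
  (pick (E2 b z) (mk w u D2)
  (pick (C01 b z) (if w 0%nat then mk (shift w) u D1 else mk (shift w) u D0)
  (pick (C12 b z) (if w 0%nat then mk (shift w) u D2 else mk (shift w) u D1)
  (pick (C02 b z) (if w 0%nat then mk (shift w) u D2 else mk (shift w) u D0)
  (pick (C012 b z) (mk w (shift u) (u 0%nat))
  (* outside S_beta: unspecified default *)
  (mk w u D0))))))).

Definition K (b : R) (s : state) : state := fst (K_step b s).
Definition d1 (b : R) (s : state) : digit := snd (K_step b s).

(* digit sequence: dseq b s n = d_{n+1}(s) = d_1 (K^n s) *)
Definition dseq (b : R) (s : state) : nat -> digit :=
  fun n => d1 b (Nat.iter n (K b) s).

(* Main.v *)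
Require Import Defs.
From Stdlib Require Import Reals Lra Lia Classical.
Open Scope R_scope.

Lemma lex_head {A : Type} (lt : A -> A -> Prop) (u v : nat -> A) :
  lex_le lt u v -> (u 0%nat = v 0%nat /\ lex_le lt (shift u) (shift v)) \/ lt (u 0%nat) (v 0%nat).
Proof.
  intros [[n [H1 H2]]|H].
  - destruct n as [|m].
    + right; exact H2.
    + left; split.
      * apply H1; lia.
      * left; exists m; split.
        -- intros k Hk; unfold shift; apply H1; lia.
        -- exact H2.
  - left; split; [apply H|right; intro k; unfold shift; apply H].
Qed.

Definition Pinv (s s' : state) : Prop :=
  snd s = snd s' /\ lex_le bool_lt (fst (fst s)) (fst (fst s'))
  /\ lex_le digit_lt (snd (fst s)) (snd (fst s')).

Lemma step (b : R) (w w' : Omega) (u u' : Upsilon) (z : R * R) :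
  lex_le bool_lt w w' -> lex_le digit_lt u u' ->
  (Defs.d1 b (w,u,z) = Defs.d1 b (w',u',z) /\ Pinv (Defs.K b (w,u,z)) (Defs.K b (w',u',z)))
  \/ digit_lt (Defs.d1 b (w,u,z)) (Defs.d1 b (w',u',z)).
Proof.
  intros Hw Hu.
  unfold Defs.d1, Defs.K, K_step, pick; simpl.
  repeat match goal with |- context [ClassicalEpsilon.excluded_middle_informative ?P] =>
    destruct (ClassicalEpsilon.excluded_middle_informative P) end; simpl;
  try (left; split; first [reflexivity | repeat split; simpl; first [exact Hws | exact Hus | exact Hw | exact Hu | reflexivity]]; fail).
  all: destruct (lex_head _ _ _ Hu) as [[Hu0 Hus]|Hu0].
  all: destruct (lex_head _ _ _ Hw) as [[Hw0 Hws]|[Hw0 Hw0']].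
  all: try (rewrite <- Hu0; left; split; first [reflexivity | repeat split; simpl; first [exact Hws | exact Hus | exact Hw | exact Hu | reflexivity]]; fail).
  all: try (right; exact Hu0; fail).
  all: try (rewrite <- Hw0; destruct (w 0%nat); left; split; first [reflexivity | repeat split; simpl; first [exact Hws | exact Hus | exact Hw | exact Hu | reflexivity]]; fail).
  all: try (rewrite Hw0, Hw0'; right; unfold digit_lt; simpl; lia).
Qed.

Lemma iterK (b : R) (s : state) (n : nat) :
  Nat.iter (S n) (Defs.K b) s = Defs.K b (Nat.iter n (Defs.K b) s).
Proof. reflexivity. Qed.

Lemma main_ind (b : R) (s s' : state) : Pinv s s' -> forall n,
  ((forall k, (k < n)%nat -> dseq b s k = dseq b s' k) /\ Pinv (Nat.iter n (Defs.K b) s) (Nat.iter n (Defs.K b) s'))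
  \/ exists m, (forall k, (k < m)%nat -> dseq b s k = dseq b s' k) /\ digit_lt (dseq b s m) (dseq b s' m).
Proof.
  intros HP n; induction n as [|n IH].
  - left; split; [intros k Hk; lia | exact HP].
  - destruct IH as [[Heq HPn]|Hex]; [|right; exact Hex].
    destruct (Nat.iter n (Defs.K b) s) as [[w1 u1] z1] eqn:E1.
    destruct (Nat.iter n (Defs.K b) s') as [[w2 u2] z2] eqn:E2.
    destruct HPn as [Hz [Hw Hu]]; simpl in Hz, Hw, Hu; subst z2.
    destruct (step b w1 w2 u1 u2 z1 Hw Hu) as [[Hd HP2]|Hlt].
    + left; split.
      * intros k Hk. destruct (Nat.eq_dec k n) as [->|Hne].
        -- unfold dseq; rewrite E1, E2; exact Hd.
        -- apply Heq; lia.
      * rewrite !iterK, E1, E2; exact HP2.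
    + right; exists n; split; [exact Heq|].
      unfold dseq; rewrite E1, E2; exact Hlt.
Qed.

Theorem theorem4p1 (beta : R) (Hb1 : 1 < beta) (Hb2 : beta <= 3 / 2)
  (w w' : Omega) (u u' : Upsilon)
  (Hw : lex_lt bool_lt w w') (Hu : lex_lt digit_lt u u')
  (z : R * R) (Hz : S_beta beta z) :
  lex_le digit_lt (dseq beta (w, u, z)) (dseq beta (w', u', z)).
Proof.
  assert (HP : Pinv (w, u, z) (w', u', z)).
  { repeat split; simpl; left; assumption. }
  destruct (classic (exists m, (forall k, (k < m)%nat -> dseq beta (w, u, z) k = dseq beta (w', u', z) k)
     /\ digit_lt (dseq beta (w, u, z) m) (dseq beta (w', u', z) m))) as [[m Hm]|Hn].
  - left; exists m; exact Hm.
  - right; intro k.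
    destruct (main_ind beta _ _ HP (S k)) as [[Heq _]|Hex].
    + apply Heq; lia.
    + contradiction.
Qed.
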